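(* Let $F$ be a PLSEM-function whose Jacobian $\mathrm{D}F$ is lower triangular. Fix $l\in\{1,\dots,p\}$ and a constant orthogonal projection matrix $A\in\mathbb{R}^{p\times p}$. Let $S\subseteq\{1,\dots,p\}\setminus\{l\}$ and let $u,u_s:\mathbb{R}\to\mathbb{R}$ ($s\in S$) be twice continuously differentiable, with each $u_s'\not\equiv0$. If $$u\Big(x_l+\sum_{s\in S}u_s(x_s)\Big)=F(x)^t(\mathrm{Id}-A)\,\partial_lF(x)\quad\text{for all }x\in\mathbb{R}^p,$$ then $(\mathrm{Id}-A)\,\partial_l^2F\equiv0$.
   Context: A PLSEM with DAG $D$ on $\{1,\dots,p\}$ is a system $X_j=\mu_j+\sum_{i\in\mathrm{pa}_D(j)} f_{j,i}(X_i)+\varepsilon_j$, $j=1,\dots,p$, where $\mu_j\in\mathbb{R}$, $f_{j,i}\in C^2(\mathbb{R})$, $f_{j,i}\not\equiv 0$, $\mathbb{E}[f_{j,i}(X_i)]=0$, and $\varepsilon_1,\dots,\varepsilon_p$ are mutually independent with $\varepsilon_j\sim\mathcal{N}(0,\sigma_j^2)$, $\sigma_j^2>0$. Its PLSEM-function is $F(x)_j=\frac{1}{\sigma_j}\big(x_j-\mu_j-\sum_{i\in\mathrm{pa}_D(j)}f_{j,i}(x_i)\big)$. $\partial_lF$ and $\partial_l^2F$ denote the vectors of first and second partial derivatives of the components of $F$ in $x_l$. *)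

(* Defs.v *)
(* real analysis over Stdlib Reals. Indices are 0-based:
   {1,...,p} of the paper is {0,...,p-1} here. Vectors in R^p are
   functions nat -> R of which only entries < p are used. *)
From Stdlib Require Import Reals List Relations.
Import ListNotations.
Open Scope R_scope.

Fixpoint rsum (n : nat) (g : nat -> R) : R :=
  match n with
  | O => 0
  | S m => rsum m g + g m
  end.

Definition lsum (s : list nat) (g : nat -> R) : R :=
  fold_right (fun i acc => g i + acc) 0 s.

Definition kdelta (i j : nat) : R := if Nat.eq_dec i j then 1 else 0.

Definition upd (x : nat -> R) (i : nat) (t : R) : nat -> R :=
  fun k => if Nat.eq_dec k i then t else x k.

Definition C2 (g : R -> R) : Prop :=
  exists g' g'' : R -> R,
    (forall t, derivable_pt_lim g t (g' t)) /\
    (forall t, derivable_pt_lim g' t (g'' t)) /\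
    continuity g''.

Definition edge (pa : nat -> list nat) (i j : nat) : Prop := In i (pa j).

Definition is_DAG (p : nat) (pa : nat -> list nat) : Prop :=
  (forall j, (p <= j)%nat -> pa j = []) /\
  (forall j i, In i (pa j) -> (i < p)%nat) /\
  (forall j, NoDup (pa j)) /\
  (forall i, ~ clos_trans nat (edge pa) i i).

(* Admissible PLSEM data (deterministic part). *)
Definition PLSEM_data (p : nat) (pa : nat -> list nat) (mu : nat -> R)
  (f : nat -> nat -> R -> R) (sigma : nat -> R) : Prop :=
  is_DAG p pa /\
  (forall j, (j < p)%nat -> 0 < sigma j) /\
  (forall j i, In i (pa j) -> C2 (f j i) /\ exists t, f j i t <> 0).

Definition PLSEM_fun (pa : nat -> list nat) (mu : nat -> R)
  (f : nat -> nat -> R -> R) (sigma : nat -> R) (x : nat -> R) (j : nat) : R :=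
  / sigma j * (x j - mu j - lsum (pa j) (fun i => f j i (x i))).

Definition orth_proj (p : nat) (A : nat -> nat -> R) : Prop :=
  (forall i j, (i < p)%nat -> (j < p)%nat -> A i j = A j i) /\
  (forall i j, (i < p)%nat -> (j < p)%nat ->
     rsum p (fun k => A i k * A k j) = A i j).

(* Main.v *)
Require Import Defs.
From Stdlib Require Import Reals List Relations Lra Lia FunctionalExtensionality Classical.
Open Scope R_scope.

Lemma dpl_ext (f g : R -> R) x l :
  (forall t, f t = g t) -> derivable_pt_lim f x l -> derivable_pt_lim g x l.
Proof. intros H D. replace g with f; [exact D| apply functional_extensionality; auto]. Qed.

Lemma dpl_cst (c x : R) : derivable_pt_lim (fun _ => c) x 0.
Proof. apply (derivable_pt_lim_const c x). Qed.

Lemma dpl_plus f g x a b : derivable_pt_lim f x a -> derivable_pt_lim g x b ->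
  derivable_pt_lim (fun t => f t + g t) x (a + b).
Proof. intros; apply (derivable_pt_lim_plus f g); auto. Qed.

Lemma dpl_minus f g x a b : derivable_pt_lim f x a -> derivable_pt_lim g x b ->
  derivable_pt_lim (fun t => f t - g t) x (a - b).
Proof. intros; apply (derivable_pt_lim_minus f g); auto. Qed.

Lemma dpl_mult f g x a b : derivable_pt_lim f x a -> derivable_pt_lim g x b ->
  derivable_pt_lim (fun t => f t * g t) x (a * g x + f x * b).
Proof. intros; apply (derivable_pt_lim_mult f g); auto. Qed.

Lemma dpl_comp f g x a b : derivable_pt_lim g x a -> derivable_pt_lim f (g x) b ->
  derivable_pt_lim (fun t => f (g t)) x (b * a).
Proof. intros; apply (derivable_pt_lim_comp g f); auto. Qed.

Lemma dpl_shift c x : derivable_pt_lim (fun t => t + c) x 1.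
Proof.
  replace 1 with (1 + 0) by ring. apply dpl_plus. apply derivable_pt_lim_id. apply dpl_cst.
Qed.

Lemma dpl_cshift f c x : derivable_pt_lim (fun t => c + f t) x
  = derivable_pt_lim (fun t => c + f t) x. Proof. reflexivity. Qed.

Lemma deriv0_const (g : R -> R) : (forall t, derivable_pt_lim g t 0) -> forall a b, g a = g b.
Proof.
  intros H a b. destruct (Rtotal_order a b) as [h|[h|h]].
  - destruct (MVT_cor2 g (fun _ => 0) a b h) as [c [Hc _]]; [intros; apply H|]. lra.
  - subst; auto.
  - destruct (MVT_cor2 g (fun _ => 0) b a h) as [c [Hc _]]; [intros; apply H|]. lra.
Qed.

Lemma dpl_uniq f x a b : derivable_pt_lim f x a -> derivable_pt_lim f x b -> a = b.
Proof. apply uniqueness_limite. Qed.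

Lemma rsum_ext n g h : (forall j, (j < n)%nat -> g j = h j) -> rsum n g = rsum n h.
Proof. induction n; simpl; intros; auto. rewrite IHn by (intros; apply H; lia). rewrite H by lia. auto. Qed.

Lemma rsum_plus n g h : rsum n (fun j => g j + h j) = rsum n g + rsum n h.
Proof. induction n; simpl; [ring|rewrite IHn; ring]. Qed.

Lemma rsum_minus n g h : rsum n (fun j => g j - h j) = rsum n g - rsum n h.
Proof. induction n; simpl; [ring|rewrite IHn; ring]. Qed.

Lemma rsum_scal n c g : rsum n (fun j => c * g j) = c * rsum n g.
Proof. induction n; simpl; [ring|rewrite IHn; ring]. Qed.

Lemma rsum_zero n g : (forall j, (j < n)%nat -> g j = 0) -> rsum n g = 0.
Proof. induction n; simpl; intros; auto. rewrite IHn by (intros; apply H; lia). rewrite H by lia. ring. Qed.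

Lemma rsum_single n m g : (m < n)%nat -> (forall j, (j < n)%nat -> j <> m -> g j = 0) ->
  rsum n g = g m.
Proof.
  induction n; simpl; intros; [lia|].
  destruct (Nat.eq_dec m n).
  - subst. rewrite rsum_zero; [ring|]. intros; apply H0; lia.
  - rewrite IHn; [rewrite (H0 n) by lia; ring|lia|intros; apply H0; lia].
Qed.

Lemma rsum_swap n m (g : nat -> nat -> R) :
  rsum n (fun j => rsum m (fun k => g j k)) = rsum m (fun k => rsum n (fun j => g j k)).
Proof.
  induction n; simpl.
  - rewrite rsum_zero; auto.
  - rewrite IHn. rewrite <- rsum_plus. auto.
Qed.

Lemma dpl_rsum n (g : nat -> R -> R) d x :
  (forall j, (j < n)%nat -> derivable_pt_lim (g j) x (d j)) ->
  derivable_pt_lim (fun t => rsum n (fun j => g j t)) x (rsum n d).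
Proof.
  induction n; simpl; intros.
  - apply dpl_cst.
  - apply dpl_plus; auto.
Qed.

Lemma rsum_sq_nonneg n g : 0 <= rsum n (fun j => g j * g j).
Proof. induction n; simpl; [lra|]. pose proof (Rle_0_sqr (g n)). unfold Rsqr in *. lra. Qed.

Lemma rsum_sq_zero n g : rsum n (fun j => g j * g j) = 0 -> forall j, (j < n)%nat -> g j = 0.
Proof.
  induction n; simpl; intros H j Hj; [lia|].
  pose proof (rsum_sq_nonneg n g). pose proof (Rle_0_sqr (g n)). unfold Rsqr in *.
  assert (g n * g n = 0) by lra.
  destruct (Nat.eq_dec j n).
  - subst. destruct (Rmult_integral _ _ H2); auto.
  - apply IHn; [lra|lia].
Qed.

Lemma kdelta_sym i j : kdelta i j = kdelta j i.
Proof. unfold kdelta. destruct (Nat.eq_dec i j), (Nat.eq_dec j i); subst; auto; congruence. Qed.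

Lemma rsum_kdelta n k g : (k < n)%nat -> rsum n (fun j => kdelta k j * g j) = g k.
Proof.
  intros. rewrite (rsum_single n k); auto.
  - unfold kdelta. destruct (Nat.eq_dec k k); [ring|congruence].
  - intros. unfold kdelta. destruct (Nat.eq_dec k j); [congruence|ring].
Qed.

Lemma lsum_ext_in s g h : (forall i, In i s -> g i = h i) -> lsum s g = lsum s h.
Proof. induction s; simpl; intros; auto. rewrite H by auto. rewrite IHs; auto. Qed.

Lemma lsum_minus s g h : lsum s g - lsum s h = lsum s (fun i => g i - h i).
Proof. induction s; simpl; [ring|]. rewrite <- IHs. ring. Qed.

Lemma lsum_zero s g : (forall i, In i s -> g i = 0) -> lsum s g = 0.
Proof. induction s; simpl; intros; auto. rewrite H, IHs by auto. ring. Qed.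

Lemma lsum_upd s (g : nat -> R -> R) x s0 e : NoDup s -> In s0 s ->
  lsum s (fun i => g i (upd x s0 e i)) = lsum s (fun i => g i (x i)) - g s0 (x s0) + g s0 e.
Proof.
  induction s as [|a s IH]; simpl; intros ND Hin; [contradiction|].
  inversion ND; subst.
  destruct Hin as [<-|Hin].
  - rewrite (lsum_ext_in s (fun i => g i (upd x a e i)) (fun i => g i (x i))).
    + unfold upd. destruct (Nat.eq_dec a a); [ring|congruence].
    + intros i Hi. unfold upd. destruct (Nat.eq_dec i a); [subst; contradiction|auto].
  - rewrite IH by auto. unfold upd at 1. destruct (Nat.eq_dec a s0); [subst; contradiction|]. ring.
Qed.

Lemma lsum_upd_notin s (g : nat -> R -> R) x s0 e : ~ In s0 s ->
  lsum s (fun i => g i (upd x s0 e i)) = lsum s (fun i => g i (x i)).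
Proof.
  intros. apply lsum_ext_in. intros i Hi. unfold upd. destruct (Nat.eq_dec i s0); [subst; contradiction|auto].
Qed.

Lemma upd_same x i : upd x i (x i) = x.
Proof. apply functional_extensionality; intro k; unfold upd; destruct (Nat.eq_dec k i); subst; auto. Qed.

Lemma upd_upd x i a b : upd (upd x i a) i b = upd x i b.
Proof. apply functional_extensionality; intro k; unfold upd; destruct (Nat.eq_dec k i); auto. Qed.

Lemma upd_eq x i a : upd x i a i = a.
Proof. unfold upd; destruct (Nat.eq_dec i i); congruence. Qed.

Lemma upd_neq x i a k : k <> i -> upd x i a k = x k.
Proof. unfold upd; destruct (Nat.eq_dec k i); congruence. Qed.

Lemma dpl_scal' g c x d : derivable_pt_lim g x d -> derivable_pt_lim (fun t => c * g t) x (c * d).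
Proof. intros H. apply (dpl_ext (mult_real_fct c g)); [intro; reflexivity|]. apply derivable_pt_lim_scal; auto. Qed.

Lemma dpl_eqv f x a b : derivable_pt_lim f x a -> a = b -> derivable_pt_lim f x b.
Proof. intros H ->; exact H. Qed.

Lemma dpl_inner h c d P Q : derivable_pt_lim h c d -> derivable_pt_lim (fun t => P + h t + Q) c d.
Proof.
  intros H. apply (dpl_eqv _ _ (0 + d + 0)); [|ring].
  apply dpl_plus; [apply dpl_plus; [apply dpl_cst|auto]|apply dpl_cst].
Qed.

Lemma C2_nonzero g g1 : (forall t, derivable_pt_lim g t (g1 t)) ->
  ~ (forall t, derivable_pt_lim g t 0) -> exists c, g1 c <> 0.
Proof.
  intros H N. apply NNPP. intro C. apply N. intro t.
  assert (g1 t = 0). { apply NNPP. intro Z. apply C. exists t. auto. }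
  rewrite <- H0. auto.
Qed.

Lemma list_single (S : list nat) m : NoDup S -> In m S -> (forall s, In s S -> s = m) -> S = m :: nil.
Proof.
  intros ND Hin Hall. destruct S as [|a [|b S']].
  - contradiction.
  - rewrite (Hall a) by (left; auto). auto.
  - exfalso. inversion ND; subst. apply H1. left. rewrite (Hall a), (Hall b); simpl; auto.
Qed.

Lemma dpl_inner2 h c d P Q : derivable_pt_lim h c d -> derivable_pt_lim (fun t => P + Q + h t) c d.
Proof.
  intros H. apply (dpl_eqv _ _ (0 + d)); [|ring].
  apply dpl_plus; [apply dpl_cst|auto].
Qed.

Lemma dpl_inner3 h c d P : derivable_pt_lim h c d -> derivable_pt_lim (fun t => P + h t) c d.
Proof.
  intros H. apply (dpl_eqv _ _ (0 + d)); [|ring].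
  apply dpl_plus; [apply dpl_cst|auto].
Qed.

Lemma dpl_lin c x : derivable_pt_lim (fun b => (b - 0) * c) x c.
Proof.
  apply (dpl_ext (mult_real_fct c id)); [intro; unfold mult_real_fct, id; ring|].
  apply (dpl_eqv _ _ (c * 1)); [|ring]. apply derivable_pt_lim_scal. apply derivable_pt_lim_id.
Qed.

Lemma F_diff pa mu f sigma j x s a b :
  PLSEM_fun pa mu f sigma (upd x s b) j - PLSEM_fun pa mu f sigma (upd x s a) j
  = / sigma j * ((if Nat.eq_dec j s then b - a else 0)
     - lsum (pa j) (fun i => if Nat.eq_dec i s then f j i b - f j i a else 0)).
Proof.
  unfold PLSEM_fun.
  replace (/ sigma j * (upd x s b j - mu j - lsum (pa j) (fun i => f j i (upd x s b i))) -
   / sigma j * (upd x s a j - mu j - lsum (pa j) (fun i => f j i (upd x s a i))))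
  with (/ sigma j * ((upd x s b j - upd x s a j) - (lsum (pa j) (fun i => f j i (upd x s b i)) - lsum (pa j) (fun i => f j i (upd x s a i))))) by ring.
  rewrite lsum_minus. f_equal. f_equal.
  - unfold upd; destruct (Nat.eq_dec j s); ring.
  - apply lsum_ext_in; intros; unfold upd; destruct (Nat.eq_dec i s); ring.
Qed.

Lemma F_sep pa mu f sigma j x x' s a b :
  PLSEM_fun pa mu f sigma (upd x s b) j - PLSEM_fun pa mu f sigma (upd x s a) j =
  PLSEM_fun pa mu f sigma (upd x' s b) j - PLSEM_fun pa mu f sigma (upd x' s a) j.
Proof. rewrite !F_diff. reflexivity. Qed.

Lemma F_diag pa mu f sigma m x a b : ~ In m (pa m) ->
  PLSEM_fun pa mu f sigma (upd x m b) m - PLSEM_fun pa mu f sigma (upd x m a) m = / sigma m * (b - a).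
Proof.
  intros H. rewrite F_diff. rewrite lsum_zero.
  - destruct (Nat.eq_dec m m); [ring|congruence].
  - intros i Hi. destruct (Nat.eq_dec i m); [subst; contradiction|auto].
Qed.

Theorem mainTheorem13 (p : nat) (pa : nat -> list nat) (mu : nat -> R)
  (f : nat -> nat -> R -> R) (sigma : nat -> R)
  (l : nat) (A : nat -> nat -> R) (S : list nat)
  (u : R -> R) (us : nat -> R -> R)
  (dF d2F : (nat -> R) -> nat -> R) :
  PLSEM_data p pa mu f sigma ->
  (forall x j i, (j < i)%nat -> (i < p)%nat ->
     derivable_pt_lim (fun t => PLSEM_fun pa mu f sigma (upd x i t) j) (x i) 0) ->
  (l < p)%nat ->
  orth_proj p A ->
  NoDup S ->
  (forall s, In s S -> (s < p)%nat /\ s <> l) ->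
  C2 u ->
  (forall s, In s S -> C2 (us s) /\ ~ (forall t, derivable_pt_lim (us s) t 0)) ->
  (forall x j, derivable_pt_lim (fun t => PLSEM_fun pa mu f sigma (upd x l t) j)
                 (x l) (dF x j)) ->
  (forall x j, derivable_pt_lim (fun t => dF (upd x l t) j) (x l) (d2F x j)) ->
  (forall x : nat -> R,
     u (x l + lsum S (fun s => us s (x s))) =
     rsum p (fun j => PLSEM_fun pa mu f sigma x j *
                      rsum p (fun k => (kdelta j k - A j k) * dF x k))) ->
  forall x j, (j < p)%nat ->
    rsum p (fun k => (kdelta j k - A j k) * d2F x k) = 0.
Proof.
  intros Hdata Htri Hl Hproj HND HS Hu HuS HdF Hd2F Hid.
  set (F := PLSEM_fun pa mu f sigma) in *.
  set (B := fun j k => kdelta j k - A j k).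
  set (v := fun x j => rsum p (fun k => B j k * dF x k)).
  set (W := fun x j => rsum p (fun k => B j k * d2F x k)).
  set (G := fun x => rsum p (fun j => F x j * v x j)).
  set (L := fun x => rsum p (fun j => dF x j * v x j + F x j * W x j)).
  set (Rs := fun x => lsum S (fun s => us s (x s))).
  change (forall x j, (j < p)%nat -> W x j = 0).
  assert (Hid' : forall x, u (x l + Rs x) = G x) by (intros; apply Hid).
  clear Hid.
  destruct Hdata as [[Hpa1 [Hpa2 [Hpa3 Hdag]]] [Hsig Hf]].
  assert (Hnoself : forall m, ~ In m (pa m)).
  { intros m Hm. apply (Hdag m). apply t_step. exact Hm. }
  destruct Hu as [u1 [u2 [Hu1 [Hu2 _]]]].
  assert (HdFdep : forall y y' k, y l = y' l -> dF y k = dF y' k).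
  { intros y y' k E.
    apply (dpl_uniq (fun t => F (upd y l t) k) (y l)); [apply HdF|].
    set (K := F (upd y l 0) k - F (upd y' l 0) k).
    apply (dpl_ext (fun t => F (upd y' l t) k + K)).
    - intro t. unfold K. pose proof (F_sep pa mu f sigma k y y' l 0 t). fold F in H. lra.
    - replace (dF y' k) with (dF y' k + 0) by ring. apply dpl_plus; [rewrite E; apply HdF|apply dpl_cst]. }
  assert (Hd2Fdep : forall y y' k, y l = y' l -> d2F y k = d2F y' k).
  { intros y y' k E.
    apply (dpl_uniq (fun t => dF (upd y l t) k) (y l)); [apply Hd2F|].
    apply (dpl_ext (fun t => dF (upd y' l t) k)).
    - intro t. apply HdFdep. rewrite !upd_eq. auto.
    - rewrite E; apply Hd2F. }
  assert (Hvdep : forall y y' k, y l = y' l -> v y k = v y' k).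
  { intros. unfold v. apply rsum_ext. intros. rewrite (HdFdep y y') by auto. auto. }
  assert (HWdep : forall y y' k, y l = y' l -> W y k = W y' k).
  { intros. unfold W. apply rsum_ext. intros. rewrite (Hd2Fdep y y') by auto. auto. }
  assert (Htri' : forall j m x a b, (j < m)%nat -> (m < p)%nat -> F (upd x m b) j = F (upd x m a) j).
  { intros j m x a b Hjm Hmp.
    apply (deriv0_const (fun t => F (upd x m t) j)). intro t.
    pose proof (Htri (upd x m t) j m Hjm Hmp) as H. rewrite upd_eq in H.
    revert H. apply dpl_ext. intro s. rewrite upd_upd. auto. }
  assert (Hstep : forall m x a b (c : nat -> R), (m < p)%nat -> (forall k, (m < k < p)%nat -> c k = 0) ->
     rsum p (fun k => (F (upd x m b) k - F (upd x m a) k) * c k) = / sigma m * (b - a) * c m).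
  { intros m x a b c Hmp Hc. rewrite (rsum_single p m); [|auto|].
    - unfold F. rewrite F_diag by auto. ring.
    - intros k Hk Hkm. destruct (Nat.lt_ge_cases k m).
      + rewrite (Htri' k m x a b) by auto. ring.
      + rewrite Hc by lia. ring. }
  assert (Hdv : forall x j, derivable_pt_lim (fun t => v (upd x l t) j) (x l) (W x j)).
  { intros x j. unfold v, W. apply dpl_rsum. intros k _. apply dpl_scal'. apply Hd2F. }
  assert (HL : forall x, u1 (x l + Rs x) = L x).
  { intro x.
    apply (dpl_uniq (fun t => G (upd x l t)) (x l)).
    - apply (dpl_ext (fun t => u (t + Rs x))).
      + intro t. rewrite <- Hid'. rewrite upd_eq. unfold Rs.
        rewrite lsum_upd_notin; auto. intro Hin. apply (HS l Hin). auto.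
      + replace (u1 (x l + Rs x)) with (u1 (x l + Rs x) * 1) by ring.
        apply dpl_comp; [apply dpl_shift|apply Hu1].
    - unfold G, L. apply dpl_rsum. intros j _.
      pose proof (dpl_mult _ _ _ _ _ (HdF x j) (Hdv x j)) as H.
      cbv beta in H. rewrite upd_same in H. exact H. }
  assert (HdG : forall x m a b, m <> l -> G (upd x m b) - G (upd x m a) =
      rsum p (fun k => (F (upd x m b) k - F (upd x m a) k) * v x k)).
  { intros x m a b Hm. unfold G. rewrite <- rsum_minus. apply rsum_ext. intros k _.
    rewrite (Hvdep (upd x m b) x), (Hvdep (upd x m a) x) by (rewrite upd_neq; auto). ring. }
  assert (HdL : forall x m a b, m <> l -> L (upd x m b) - L (upd x m a) =
      rsum p (fun k => (F (upd x m b) k - F (upd x m a) k) * W x k)).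
  { intros x m a b Hm. unfold L. rewrite <- rsum_minus. apply rsum_ext. intros k _.
    rewrite (Hvdep (upd x m b) x), (Hvdep (upd x m a) x) by (rewrite upd_neq; auto).
    rewrite (HWdep (upd x m b) x), (HWdep (upd x m a) x) by (rewrite upd_neq; auto).
    rewrite (HdFdep (upd x m b) x), (HdFdep (upd x m a) x) by (rewrite upd_neq; auto). ring. }
  assert (HRnot : forall y j e, ~ In j S -> Rs (upd y j e) = Rs y).
  { intros. unfold Rs. apply lsum_upd_notin; auto. }
  assert (HRin : forall y j e, In j S -> Rs (upd y j e) = Rs y - us j (y j) + us j e).
  { intros. unfold Rs. apply lsum_upd; auto. }
  assert (Hone : forall m, (l < m < p)%nat -> (forall y k', (m < k' < p)%nat -> W y k' = 0) ->
            forall x, W x m = 0).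
  { intros m Hm IH x.
    assert (Hml : m <> l) by lia.
    assert (Hsm : 0 < sigma m) by (apply Hsig; lia).
    assert (HdLm : forall y a b, L (upd y m b) - L (upd y m a) = / sigma m * (b - a) * W y m).
    { intros. rewrite HdL by auto. apply Hstep; [lia|]. intros; apply IH; lia. }
    assert (Hfin : L (upd x m (x m + 1)) - L (upd x m (x m)) = 0 -> W x m = 0).
    { intro Z. rewrite HdLm in Z. replace (x m + 1 - x m) with 1 in Z by ring.
      assert (/ sigma m <> 0) by (apply Rinv_neq_0_compat; lra).
      destruct (Rmult_integral _ _ Z) as [Z1|Z1]; auto.
      destruct (Rmult_integral _ _ Z1); lra. }
    destruct (classic (In m S)) as [HmS|HmS].
    2:{ apply Hfin. rewrite <- !HL. rewrite !upd_neq by auto. rewrite !HRnot by auto. ring. }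
    destruct (classic (exists s', In s' S /\ s' <> m)) as [[s' [Hs' Hs'm]]|Hno].
    - destruct (HS s' Hs') as [Hs'p Hs'l].
      destruct (HuS m HmS) as [[h1 [h2 [Hh1 [Hh2 _]]]] Hhn].
      destruct (HuS s' Hs') as [[g1 [g2 [Hg1 [Hg2 _]]]] Hgn].
      destruct (C2_nonzero _ _ Hh1 Hhn) as [c0 Hc0].
      destruct (C2_nonzero _ _ Hg1 Hgn) as [b0 Hb0].
      set (T := fun y : nat -> R => y l + Rs y - us m (y m) - us s' (y s')).
      assert (K : forall y c a b, u (T y + us m c + us s' b) - u (T y + us m c + us s' a)
                    = G (upd y s' b) - G (upd y s' a)).
      { intros y c a b.
        assert (E : forall e, u (T y + us m c + us s' e) = G (upd (upd y m c) s' e)).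
        { intro e. rewrite <- Hid'. f_equal. rewrite !upd_neq by auto.
          rewrite !HRin by auto. rewrite upd_neq by auto. unfold T; cbv beta. ring. }
        rewrite !E. rewrite !HdG by auto.
        apply rsum_ext. intros k _.
        rewrite (F_sep pa mu f sigma k (upd y m c) y). fold F.
        rewrite (Hvdep (upd y m c) y) by (rewrite upd_neq; auto). auto. }
      assert (K1 : forall y a b, u1 (T y + us m c0 + us s' b) = u1 (T y + us m c0 + us s' a)).
      { intros y a b.
        assert (D : derivable_pt_lim (fun c => u (T y + us m c + us s' b) - u (T y + us m c + us s' a)) c0
                   (u1 (T y + us m c0 + us s' b) * h1 c0 - u1 (T y + us m c0 + us s' a) * h1 c0)).
        { apply dpl_minus; apply dpl_comp; try apply Hu1; apply dpl_inner; apply Hh1. }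
        assert (D0 : derivable_pt_lim (fun c => u (T y + us m c + us s' b) - u (T y + us m c + us s' a)) c0 0).
        { apply (dpl_ext (fun _ => G (upd y s' b) - G (upd y s' a))); [intro; rewrite K; auto|apply dpl_cst]. }
        pose proof (dpl_uniq _ _ _ _ D D0) as E.
        apply Rmult_eq_reg_r with (h1 c0); auto. lra. }
      assert (K2 : forall y, u2 (T y + us m c0 + us s' b0) = 0).
      { intro y.
        assert (D : derivable_pt_lim (fun b => u1 (T y + us m c0 + us s' b)) b0 (u2 (T y + us m c0 + us s' b0) * g1 b0)).
        { apply dpl_comp; [apply dpl_inner2; apply Hg1|apply Hu2]. }
        assert (D0 : derivable_pt_lim (fun b => u1 (T y + us m c0 + us s' b)) b0 0).
        { apply (dpl_ext (fun _ => u1 (T y + us m c0 + us s' 0))); [intro; symmetry; apply K1|apply dpl_cst]. }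
        pose proof (dpl_uniq _ _ _ _ D D0) as E.
        destruct (Rmult_integral _ _ E); [auto|contradiction]. }
      assert (K3 : forall Y, u2 Y = 0).
      { intro Y. set (z0 := fun _ : nat => 0).
        set (K0 := Rs z0 - us m 0 - us s' 0).
        pose proof (K2 (upd z0 l (Y - K0 - us m c0 - us s' b0))) as E.
        unfold T in E. rewrite upd_eq, !upd_neq in E by auto.
        rewrite HRnot in E by (intro Hin; apply (HS l Hin); auto).
        replace (Y - K0 - us m c0 - us s' b0 + Rs z0 - us m (z0 m) - us s' (z0 s') + us m c0 + us s' b0) with Y in E
          by (unfold K0, z0; ring). auto. }
      assert (K4 : forall y1 y2, u1 y1 = u1 y2).
      { apply deriv0_const. intro t. rewrite <- (K3 t). apply Hu2. }
      apply Hfin. rewrite <- !HL. rewrite (K4 _ (u1 0)). rewrite (K4 (_ + _) (u1 0)). ring.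
    - assert (HSm : S = m :: nil).
      { apply list_single; auto. intros s Hs. apply NNPP; intro Hsm'. apply Hno. exists s; auto. }
      assert (HR1 : forall y, Rs y = us m (y m)) by (intros; unfold Rs; rewrite HSm; simpl; ring).
      assert (Hv0 : forall y j, (m < j < p)%nat -> v y j = 0).
      { assert (Hvind : forall n y j, (m < j < p)%nat -> (p - n <= j)%nat -> v y j = 0).
        { induction n; intros y j Hj Hn; [lia|].
          destruct (Compare_dec.le_lt_dec (p - n) j); [apply IHn; auto|].
          assert (Hjl : j <> l) by lia.
          assert (HjS : ~ In j S) by (rewrite HSm; simpl; intros [Hq|[]]; lia).
          assert (Hsj : 0 < sigma j) by (apply Hsig; lia).
          assert (E : G (upd y j (y j + 1)) - G (upd y j (y j)) = / sigma j * (y j + 1 - y j) * v y j).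
          { rewrite HdG by auto. apply Hstep; [lia|]. intros; apply IHn; lia. }
          rewrite <- !Hid' in E. rewrite !upd_neq in E by auto. rewrite !HRnot in E by auto.
          replace (y j + 1 - y j) with 1 in E by ring.
          assert (/ sigma j <> 0) by (apply Rinv_neq_0_compat; lra).
          assert (Z : / sigma j * 1 * v y j = 0) by lra.
          destruct (Rmult_integral _ _ Z) as [Z1|Z1]; auto.
          destruct (Rmult_integral _ _ Z1); lra. }
        intros; apply (Hvind p); auto; lia. }
      destruct (HuS m HmS) as [[h1 [h2 [Hh1 [Hh2 _]]]] Hhn].
      assert (E : forall t a b, u (t + us m b) - u (t + us m a) = (b - a) * (/ sigma m * v (upd x l t) m)).
      { intros t a b.
        assert (Ey : forall e, u (t + us m e) = G (upd (upd x l t) m e)).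
        { intro e. rewrite <- Hid'. rewrite upd_neq by auto. rewrite HR1. rewrite !upd_eq. auto. }
        rewrite !Ey. rewrite HdG by auto. rewrite Hstep; [ring|lia|]. intros; apply Hv0; lia. }
      set (t0 := x l). set (k := / sigma m * W x m).
      set (P := / sigma m * v (upd x l t0) m).
      assert (Ei : forall b, u1 (t0 + us m b) * h1 b = P).
      { intro b.
        apply (dpl_uniq (fun b => u (t0 + us m b) - u (t0 + us m 0)) b).
        - apply (dpl_eqv _ _ (u1 (t0 + us m b) * h1 b - 0)); [|ring].
          apply dpl_minus; [|apply dpl_cst]. apply dpl_comp; [apply dpl_inner3; apply Hh1|apply Hu1].
        - apply (dpl_ext (fun b => (b - 0) * P)); [intro; rewrite E; auto|].
          apply dpl_lin. }
      assert (Eii : forall b, u1 (t0 + us m b) - u1 (t0 + us m 0) = (b - 0) * k).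
      { intro b.
        apply (dpl_uniq (fun t => u (t + us m b) - u (t + us m 0)) t0).
        - apply (dpl_eqv _ _ (u1 (t0 + us m b) * 1 - u1 (t0 + us m 0) * 1)); [|ring].
          apply dpl_minus; apply dpl_comp; try apply Hu1; apply dpl_shift.
        - apply (dpl_ext (fun t => (b - 0) * (/ sigma m * v (upd x l t) m))); [intro; rewrite E; auto|].
          unfold k. apply dpl_scal'. apply dpl_scal'. apply Hdv. }
      assert (Eiii : forall b, u2 (t0 + us m b) * h1 b = k).
      { intro b.
        apply (dpl_uniq (fun b => u1 (t0 + us m b)) b).
        - apply dpl_comp; [apply dpl_inner3; apply Hh1|apply Hu2].
        - apply (dpl_ext (fun b => u1 (t0 + us m 0) + (b - 0) * k)); [intro; rewrite <- Eii; ring|].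
          apply (dpl_eqv _ _ (0 + k)); [|ring].
          apply dpl_plus; [apply dpl_cst|apply dpl_lin]. }
      assert (Hk0 : k = 0).
      { apply NNPP; intro Hk. set (C := u1 (t0 + us m 0)). set (bs := - C / k).
        assert (Hu1b : forall b, u1 (t0 + us m b) = C + b * k) by (intro b; pose proof (Eii b); unfold C; lra).
        pose proof (Ei bs) as E1. rewrite Hu1b in E1.
        replace (C + bs * k) with 0 in E1 by (unfold bs; field; auto).
        pose proof (Ei (bs + 1)) as E2. rewrite Hu1b in E2.
        replace (C + (bs + 1) * k) with k in E2 by (unfold bs; field; auto).
        assert (Z : k * h1 (bs + 1) = 0) by lra.
        destruct (Rmult_integral _ _ Z) as [Z1|Z1]; [contradiction|].
        pose proof (Eiii (bs + 1)) as E3. rewrite Z1 in E3. lra. }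
      unfold k in Hk0.
      assert (/ sigma m <> 0) by (apply Rinv_neq_0_compat; lra).
      destruct (Rmult_integral _ _ Hk0); [contradiction|auto]. }
  assert (HWpos : forall x k, (l < k < p)%nat -> W x k = 0).
  { assert (HWind : forall n x k, (l < k < p)%nat -> (p - n <= k)%nat -> W x k = 0).
    { induction n; intros x k Hk Hn; [lia|].
      destruct (Compare_dec.le_lt_dec (p - n) k); [apply IHn; auto|].
      apply Hone; [lia|]. intros; apply IHn; lia. }
    intros; apply (HWind p); auto; lia. }
  assert (HdFc : forall k, (k <= l)%nat -> exists c, forall y, dF y k = c).
  { intros k Hk. destruct (Nat.eq_dec k l) as [->|Hkl].
    - exists (/ sigma l). intro y.
      apply (dpl_uniq (fun t => F (upd y l t) l) (y l)); [apply HdF|].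
      apply (dpl_ext (fun t => F (upd y l 0) l + / sigma l * (t - 0))).
      + intro t. pose proof (F_diag pa mu f sigma l y 0 t (Hnoself l)). fold F in H. lra.
      + apply (dpl_eqv _ _ (0 + / sigma l * (1 - 0))); [|ring].
        apply dpl_plus; [apply dpl_cst|]. apply dpl_scal'. apply dpl_minus; [apply derivable_pt_lim_id|apply dpl_cst].
    - exists 0. intro y. apply (dpl_uniq (fun t => F (upd y l t) k) (y l)); [apply HdF|]. apply Htri; lia. }
  assert (Hd2F0 : forall x k, (k <= l)%nat -> d2F x k = 0).
  { intros x k Hk. destruct (HdFc k Hk) as [c Hc].
    apply (dpl_uniq (fun t => dF (upd x l t) k) (x l)); [apply Hd2F|].
    apply (dpl_ext (fun _ => c)); [intro; rewrite Hc; auto|apply dpl_cst]. }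
  destruct Hproj as [Asym Aidem].
  assert (BB : forall k i, (k < p)%nat -> (i < p)%nat -> rsum p (fun j => B k j * B j i) = B k i).
  { intros k i Hk Hi. unfold B.
    rewrite (rsum_ext _ _ (fun j => kdelta k j * (kdelta j i - A j i) - kdelta i j * A k j + A k j * A j i)).
    - rewrite rsum_plus, rsum_minus, !rsum_kdelta by auto. rewrite Aidem by auto. ring.
    - intros j _. rewrite (kdelta_sym j i). ring. }
  assert (Bsym : forall k j, (k < p)%nat -> (j < p)%nat -> B k j = B j k).
  { intros. unfold B. rewrite kdelta_sym, Asym by auto. auto. }
  assert (Bid : forall x k, (k < p)%nat -> rsum p (fun j => B k j * W x j) = W x k).
  { intros x k Hk. unfold W.
    rewrite (rsum_ext _ _ (fun j => rsum p (fun i => B k j * (B j i * d2F x i))))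
      by (intros; rewrite rsum_scal; auto).
    rewrite rsum_swap. apply rsum_ext. intros i Hi.
    rewrite (rsum_ext _ _ (fun j => (B k j * B j i) * d2F x i)) by (intros; ring).
    rewrite (rsum_ext _ _ (fun j => d2F x i * (B k j * B j i))) by (intros; ring).
    rewrite rsum_scal, BB by auto. ring. }
  intros x.
  apply rsum_sq_zero.
  transitivity (rsum p (fun j => rsum p (fun k => W x j * (B j k * d2F x k)))).
  { apply rsum_ext. intros j _. rewrite rsum_scal. auto. }
  rewrite rsum_swap.
  apply rsum_zero. intros k Hk.
  rewrite (rsum_ext _ _ (fun j => d2F x k * (B k j * W x j))).
  2:{ intros j Hj. rewrite Bsym by auto. ring. }
  rewrite rsum_scal, Bid by auto.
  destruct (Nat.le_gt_cases k l).
  - rewrite Hd2F0 by auto. ring.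
  - rewrite HWpos by lia. ring.
Qed.
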